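(* Let $n\geq 3$ and let $o_1,o_2$ be two non-parallel $\mathcal{O}_n$-directions. Write $o_1=\alpha+\beta\zeta_n$ and $o_2=\gamma+\delta\zeta_n$ with $\alpha,\beta,\gamma,\delta\in\mathbb{Z}[\zeta_n+\bar\zeta_n]$. Let $G_{\{o_1,o_2\}}=\bigcap_{i=1}^2\bigcup_{t\in\mathcal{O}_n}(t+\mathbb{R}o_i)$ be the complete grid and let $M_{\{o_1,o_2\}}=\operatorname{lin}_{\mathbb{Z}[\zeta_n+\bar\zeta_n]}\left(\left\{\frac{1}{\alpha\delta-\beta\gamma}o_1,\frac{1}{\alpha\delta-\beta\gamma}o_2\right\}\right)$. Then $\mathcal{O}_n\subset G_{\{o_1,o_2\}}\subset\mathbb{C}$ and $G_{\{o_1,o_2\}}\subset M_{\{o_1,o_2\}}$.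
   Context: $\zeta_n$ is a primitive $n$th root of unity in $\mathbb{C}\cong\mathbb{R}^2$, $\bar\zeta_n$ its complex conjugate, $\mathcal{O}_n=\mathbb{Z}[\zeta_n]$. An $\mathcal{O}_n$-direction is an element of $\mathcal{O}_n\setminus\{0\}$. Every element of $\mathcal{O}_n$ can be written uniquely as $\varphi+\psi\zeta_n$ with $\varphi,\psi\in\mathbb{Z}[\zeta_n+\bar\zeta_n]$, so $\alpha,\beta,\gamma,\delta$ are uniquely determined, and $\alpha\delta-\beta\gamma\neq0$ since $o_1,o_2$ are non-parallel. $\operatorname{lin}_R(S)$ denotes the set of $R$-linear combinations of elements of $S$. *)

(* Defs.v *)
From mathcomp Require Import all_boot all_order all_algebra.
From mathcomp Require Import reals.
From mathcomp.real_closed Require Export complex.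
Set Implicit Arguments. Unset Strict Implicit. Unset Printing Implicit Defensive.
Import Order.TTheory GRing.Theory Num.Theory.
Local Open Scope ring_scope.

Section Defs.
Variable R : realType.
Local Notation C := R[i].

Definition intpoly_at (x z : C) : Prop :=
  exists p : {poly int}, z = (map_poly (fun k : int => k%:~R) p).[x].

(* O_n = Z[zeta] *)
Definition On (zeta : C) : C -> Prop := intpoly_at zeta.

Definition Zreal (zeta : C) : C -> Prop := intpoly_at (zeta + (zeta^*)%C).

Definition On_direction (zeta o : C) : Prop := On zeta o /\ o <> 0.

Definition parallel (o1 o2 : C) : Prop := exists r : R, o1 = (r%:C)%C * o2.

Definition grid (zeta o1 o2 : C) : C -> Prop :=
  fun z => (exists t, On zeta t /\ exists r : R, z = t + (r%:C)%C * o1) /\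
           (exists t, On zeta t /\ exists r : R, z = t + (r%:C)%C * o2).

Definition Mlat (zeta o1 o2 d : C) : C -> Prop :=
  fun z => exists a b, Zreal zeta a /\ Zreal zeta b /\
             z = a * (d^-1 * o1) + b * (d^-1 * o2).
End Defs.

(* Main.v *)
Require Import Defs.
From mathcomp Require Import all_boot all_order all_algebra.
From mathcomp Require Import reals.
From mathcomp.real_closed Require Import complex.
From mathcomp Require Import ring.
Import Order.TTheory GRing.Theory Num.Theory.
Local Open Scope ring_scope.

Section Helpers.
Variable R : realType.
Local Notation C := R[i].
Implicit Types x y z : C.

Lemma ip0 x : intpoly_at x 0.
Proof. by exists 0; rewrite rmorph0 horner0. Qed.

Lemma ipC x (k : int) : intpoly_at x (k%:~R).
Proof. by exists k%:P; rewrite map_polyC hornerC. Qed.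

Lemma ipX x : intpoly_at x x.
Proof. by exists 'X; rewrite map_polyX hornerX. Qed.

Lemma ipD x y z : intpoly_at x y -> intpoly_at x z -> intpoly_at x (y + z).
Proof. by move=> [p ->] [q ->]; exists (p + q); rewrite rmorphD hornerD. Qed.

Lemma ipB x y z : intpoly_at x y -> intpoly_at x z -> intpoly_at x (y - z).
Proof. by move=> [p ->] [q ->]; exists (p - q); rewrite rmorphB hornerD hornerN. Qed.

Lemma ipM x y z : intpoly_at x y -> intpoly_at x z -> intpoly_at x (y * z).
Proof. by move=> [p ->] [q ->]; exists (p * q); rewrite rmorphM hornerM. Qed.

Lemma cD x y : conjc (x + y) = conjc x + conjc y. Proof. exact: rmorphD. Qed.
Lemma cB x y : conjc (x - y) = conjc x - conjc y. Proof. exact: rmorphB. Qed.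
Lemma cM x y : conjc (x * y) = conjc x * conjc y. Proof. exact: rmorphM. Qed.
Lemma cV x : conjc (x^-1) = (conjc x)^-1. Proof. exact: fmorphV. Qed.
Lemma cX x k : conjc (x ^+ k) = (conjc x) ^+ k. Proof. exact: rmorphXn. Qed.
Lemma cI (k : int) : conjc (k%:~R : C) = k%:~R. Proof. exact: rmorph_int. Qed.
Lemma c0 : conjc (0 : C) = 0. Proof. exact: rmorph0. Qed.
Lemma cK x : conjc (conjc x) = x. Proof. exact: conjcK. Qed.

Lemma ev_step (x : C) p c : (map_poly (fun k : int => k%:~R) (p * 'X + c%:P)).[x] = (map_poly (fun k : int => k%:~R) p).[x] * x + c%:~R.
Proof. by rewrite rmorphD rmorphM /= map_polyX map_polyC hornerD hornerMX hornerC. Qed.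

Definition isreal x := conjc x = x.

Lemma realD x y : isreal x -> isreal y -> isreal (x + y).
Proof. by move=> hx hy; rewrite /isreal cD hx hy. Qed.
Lemma realB x y : isreal x -> isreal y -> isreal (x - y).
Proof. by move=> hx hy; rewrite /isreal cB hx hy. Qed.
Lemma realM x y : isreal x -> isreal y -> isreal (x * y).
Proof. by move=> hx hy; rewrite /isreal cM hx hy. Qed.
Lemma realV x : isreal x -> isreal (x^-1).
Proof. by move=> hx; rewrite /isreal cV hx. Qed.
Lemma realR (r : R) : isreal (r%:C)%C.
Proof. exact: conjc_real. Qed.

Lemma real_ex x : isreal x -> exists r : R, x = (r%:C)%C.
Proof.
case: x => a b; rewrite /isreal /= => -[] hb.
exists a; congr Complex.
have h2 : b *+ 2 = 0 by rewrite mulr2n -{1}hb addNr.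
by move/eqP: h2; rewrite mulrn_eq0 /= => /eqP.
Qed.

Lemma Zreal_real zeta a : Zreal zeta a -> isreal a.
Proof.
have hs : isreal (zeta + (zeta^*)%C) by rewrite /isreal cD cK addrC.
case=> p ->; elim/poly_ind: p => [|p c IH].
  by rewrite rmorph0 horner0 /isreal c0.
rewrite ev_step.
apply: realD; first exact: realM.
by rewrite /isreal cI.
Qed.

Lemma On_decomp zeta z : zeta * (zeta^*)%C = 1 -> On zeta z ->
  exists a b, Zreal zeta a /\ Zreal zeta b /\ z = a + b * zeta.
Proof.
move=> hz [p ->]; elim/poly_ind: p => [|p c [a [b [ha [hb IH]]]]].
  by exists 0, 0; rewrite rmorph0 horner0 /Zreal; do !split; try exact: ip0; rewrite mul0r addr0.
rewrite ev_step IH.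
exists (c%:~R - b), (a + b * (zeta + (zeta^*)%C)); do !split.
- by apply: ipB => //; apply: ipC.
- by apply: ipD => //; apply: ipM => //; apply: ipX.
- rewrite -[X in _ = _ - X + _](mulr1 b) -hz; ring.
Qed.

Lemma c1 : conjc (1 : C) = 1. Proof. exact: rmorph1. Qed.
Lemma realN x : isreal x -> isreal (- x).
Proof. by move=> hx; rewrite -sub0r; apply: realB => //; rewrite /isreal c0. Qed.

Lemma prim_conj n (zeta : C) : (0 < n)%N -> n.-primitive_root zeta -> zeta * conjc zeta = 1.
Proof.
move=> n0 pr; have h1 : zeta ^+ n = 1 := prim_expr_order pr.
have hge : 0 <= zeta * conjc zeta by exact: mulcJ_ge0.
have : (zeta * conjc zeta) ^+ n == 1 by rewrite exprMn -cX h1 c1 mul1r.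
by rewrite (pexpr_eq1 n0 hge) => /eqP.
Qed.

Lemma indep n (zeta a b : C) : (3 <= n)%N -> n.-primitive_root zeta -> zeta * conjc zeta = 1 ->
  isreal a -> isreal b -> a + b * zeta = 0 -> a = 0 /\ b = 0.
Proof.
move=> n3 pr hz ha hb h.
have hb0 : b = 0.
  apply/eqP/negPn/negP => bn0.
  have ha' : a = - (b * zeta) by apply/eqP; rewrite -addr_eq0 h.
  have ez : zeta = - a / b by rewrite ha' opprK; field.
  have zr : isreal zeta by rewrite ez; apply: realM; [apply: realN | apply: realV].
  have : zeta ^+ 2 == 1 by rewrite expr2 -{2}zr hz.
  rewrite -(prim_order_dvd pr) => /(dvdn_leq (isT : (0 < 2)%N)) h2.
  by have := leq_trans n3 h2.
by split => //; move: h; rewrite hb0 mul0r addr0.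
Qed.

Lemma par_lemma (zeta alpha beta gamma delta : C) :
  isreal alpha -> isreal beta -> isreal gamma -> isreal delta ->
  gamma + delta * zeta <> 0 -> alpha * delta - beta * gamma = 0 ->
  parallel (alpha + beta * zeta) (gamma + delta * zeta).
Proof.
move=> ra rb rg rd ho2 hd.
case: (eqVneq gamma 0) => [g0|gn0].
- have dn0 : delta != 0 by apply/eqP => d0; apply: ho2; rewrite g0 d0 mul0r addr0.
  have a0 : alpha = 0.
    by move: hd; rewrite g0 mulr0 subr0 => /eqP; rewrite mulf_eq0 (negPf dn0) orbF => /eqP.
  have [r hr] := real_ex _ (realM _ _ rb (realV _ rd)).
  by exists r; rewrite -hr a0 g0; field.
- have [r hr] := real_ex _ (realM _ _ ra (realV _ rg)).
  have hb' : beta = alpha * delta / gamma by rewrite (subr0_eq hd) mulfK.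
  by exists r; rewrite -hr hb'; field.
Qed.

End Helpers.
Arguments Zreal_real {R zeta a}.
Arguments On_decomp {R zeta z}.
Arguments prim_conj {R n zeta}.
Arguments indep {R n zeta a b}.
Arguments realR {R}.
Arguments realD {R}. Arguments realB {R}. Arguments realM {R}.
Arguments par_lemma {R}.
Arguments ipD {R}. Arguments ipB {R}. Arguments ipM {R}.

Theorem proposition5p2 (R : realType) (n : nat) (zeta : R[i])
  (o1 o2 alpha beta gamma delta : R[i]) :
  (3 <= n)%N -> n.-primitive_root zeta ->
  On_direction zeta o1 -> On_direction zeta o2 -> ~ parallel o1 o2 ->
  Zreal zeta alpha -> Zreal zeta beta -> Zreal zeta gamma -> Zreal zeta delta ->
  o1 = alpha + beta * zeta -> o2 = gamma + delta * zeta ->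
  (forall z, On zeta z -> grid zeta o1 o2 z) /\
  (forall z, grid zeta o1 o2 z -> Mlat zeta o1 o2 (alpha * delta - beta * gamma) z).
Proof.
move=> n3 pr [_ o1n0] [_ o2n0] npar ha hb hg hd ho1 ho2.
have n0 : (0 < n)%N := leq_trans (isT : (0 < 3)%N) n3.
have hz := prim_conj n0 pr.
have ra := Zreal_real ha; have rb := Zreal_real hb.
have rg := Zreal_real hg; have rd := Zreal_real hd.
have dn0 : alpha * delta - beta * gamma != 0.
  apply/eqP => d0; apply: npar; rewrite ho1 ho2; apply: par_lemma => //.
  by rewrite -ho2.
split.
  move=> z hz'; split; exists z; split => //; exists 0;
  by rewrite (rmorph0 (real_complex R)) mul0r addr0.
move=> z [[t1 [ht1 [r1 hz1]]] [t2 [ht2 [r2 hz2]]]].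
have [e [f [he [hf et1]]]] := On_decomp hz ht1.
have h21 : On zeta (t2 - t1) by apply: ipB.
have [a [b [ha' [hb' eab]]]] := On_decomp hz h21.
have E : t2 - t1 = (r1%:C)%C * o1 - (r2%:C)%C * o2.
  by rewrite -[t2](addrK ((r2%:C)%C * o2)) -hz2 hz1; ring.
have key : (a - (r1%:C)%C * alpha + (r2%:C)%C * gamma)
         + (b - (r1%:C)%C * beta + (r2%:C)%C * delta) * zeta = 0.
  transitivity ((a + b * zeta) - ((r1%:C)%C * o1 - (r2%:C)%C * o2)).
    by rewrite ho1 ho2; ring.
  by rewrite -eab E subrr.
have rr1 := realR r1; have rr2 := realR r2.
have ra' := Zreal_real ha'; have rb' := Zreal_real hb'.
have [A1 B1] := indep n3 pr hz
  (realD _ _ (realB _ _ ra' (realM _ _ rr1 ra)) (realM _ _ rr2 rg))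
  (realD _ _ (realB _ _ rb' (realM _ _ rr1 rb)) (realM _ _ rr2 rd)) key.
have ha2 : a = (r1%:C)%C * alpha - (r2%:C)%C * gamma.
  by rewrite -(subr0 a) -A1; ring.
have hb2 : b = (r1%:C)%C * beta - (r2%:C)%C * delta.
  by rewrite -(subr0 b) -B1; ring.
exists ((e * delta - f * gamma) + (a * delta - b * gamma)), (f * alpha - e * beta).
split; first by apply: ipD; apply: ipB; apply: ipM.
split; first by apply: ipB; apply: ipM.
rewrite hz1 et1 ho1 ho2 ha2 hb2.
by field.
Qed.
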